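(* Let $f:\mathbb{R}^N\times\mathbb{R}\to\mathbb{R}^N$ be $C^1$ with $f(x,t+T)=f(x,t)$ for all $x,t$, for some $T>0$ (this includes autonomous $f$), and let $x_\ast$ be a $T$-periodic solution of $\dot x(t)=f(x(t),t)$. Suppose the linearization $\dot y(t)=\partial_xf(x_\ast(t),t)y(t)$ has at least one real Floquet multiplier larger than $1$. Then for every $k\in\mathbb{R}$, the linearization $\dot y(t)=\partial_xf(x_\ast(t),t)y(t)+k[y(t)-y(t-T)]$ has a real Floquet multiplier larger than $1$; in particular $x_\ast$ is unstable as a solution of $\dot x(t)=f(x(t),t)+k[x(t)-x(t-T)]$.
   Context: Floquet multipliers of a linear $T$-periodic ODE are eigenvalues of its monodromy matrix; for the $T$-periodic delay equation they are the nonzero eigenvalues of the monodromy operator on $C([-T,0],\mathbb{C}^N)$, i.e. nonzero $\mu$ for which a nonzero solution with $y(t+T)=\mu y(t)$ exists. *)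

(* Defs.v *)
From HB Require Import structures.
From mathcomp Require Import all_boot all_order all_algebra.
From mathcomp Require Import all_classical all_reals all_analysis.
Set Implicit Arguments. Unset Strict Implicit. Unset Printing Implicit Defensive.
Import Order.TTheory GRing.Theory Num.Theory.
Import numFieldNormedType.Exports.
Local Open Scope ring_scope.

Section Floquet.
Variables (R : realType) (N : nat).
Notation vec := 'rV[R]_N.

Definition uncurry_f (f : vec -> R -> vec) : vec * R -> vec :=
  fun p => f p.1 p.2.

Definition C1 (f : vec -> R -> vec) : Prop :=
  (forall p : vec * R, differentiable (uncurry_f f) p) /\
  (forall v : vec * R, continuous (fun p : vec * R => 'D_v (uncurry_f f) p)).

Definition Dxf (f : vec -> R -> vec) (x : vec) (t : R) (y : vec) : vec :=
  'D_(y, 0) (uncurry_f f) (x, t).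

Definition is_solution (f : vec -> R -> vec) (x : R -> vec) : Prop :=
  forall t, derivable x t 1 /\ derive x t 1 = f (x t) t.

Definition solves_linearization (f : vec -> R -> vec) (xs : R -> vec)
  (y : R -> vec) : Prop :=
  forall t, derivable y t 1 /\ derive y t 1 = Dxf f (xs t) t (y t).

Definition solves_delayed_linearization (f : vec -> R -> vec) (xs : R -> vec)
  (k T : R) (y : R -> vec) : Prop :=
  forall t, derivable y t 1 /\
    derive y t 1 = Dxf f (xs t) t (y t) + k *: (y t - y (t - T)).

(* Phi is the principal fundamental matrix of the linearization
   (row convention: each row of Phi(t) is a solution, Phi(0) = I), so that
   every solution satisfies y(t) = y(0) *m Phi(t); the monodromy matrix
   is Phi(T). *)
Definition principal_fundamental (f : vec -> R -> vec) (xs : R -> vec)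
  (Phi : R -> 'M[R]_N) : Prop :=
  Phi 0 = 1%:M /\
  forall i : 'I_N, solves_linearization f xs (fun t => row i (Phi t)).

Definition ode_floquet_multiplier (f : vec -> R -> vec) (xs : R -> vec)
  (T mu : R) : Prop :=
  exists Phi, principal_fundamental f xs Phi /\ eigenvalue (Phi T) mu.

Definition dde_floquet_multiplier (f : vec -> R -> vec) (xs : R -> vec)
  (k T mu : R) : Prop :=
  mu != 0 /\
  exists y : R -> vec, solves_delayed_linearization f xs k T y /\
    (exists t, y t != 0) /\ (forall t, y (t + T) = mu *: y t).

End Floquet.

(* Main.v *)
Require Import Defs.
From HB Require Import structures.
From mathcomp Require Import all_boot all_order all_algebra.
From mathcomp Require Import all_classical all_reals all_analysis.
From mathcomp Require Import ring lra.
Import Order.TTheory GRing.Theory Num.Theory.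
Import numFieldNormedType.Exports.
Local Open Scope ring_scope.
Lemma Dxf_lin (R : realType) (N : nat) (f : 'rV[R]_N -> R -> 'rV[R]_N) (hC1 : C1 f)
  x t (a : R) (y z : 'rV[R]_N) :
  Dxf f x t (a *: y + z) = a *: Dxf f x t y + Dxf f x t z.
Proof.
case: hC1 => hd _.
rewrite /Dxf !deriveE //.
have -> : ((a *: y + z, 0) : 'rV[R]_N * R) = a *: (y, 0) + (z, 0).
  by congr (_, _); rewrite /= scaler0 addr0.
by rewrite linearD linearZ.
Qed.

Lemma Dxf_cont (R : realType) (N : nat) (f : 'rV[R]_N -> R -> 'rV[R]_N) (hC1 : C1 f)
  (xs : R -> 'rV[R]_N) y :
  (forall t, derivable xs t 1) -> continuous (fun t => Dxf f (xs t) t y).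
Proof.
case: hC1 => hd hc hx t.
apply: (@continuous_comp _ _ _ (fun t => (xs t, t)) ('D_(y, 0) (uncurry_f f))); last exact: hc.
apply: differentiable_continuous; apply: differentiable_pair.
  exact/derivable1_diffP.
exact: ex_diff.
Qed.
Lemma is_derive_lin_exp (R : realType) (C s : R) :
  is_derive s 1 (fun s : R => expR (C * s)) (expR (C * s) * C).
Proof.
have hi : is_derive s 1 (fun s : R => C * s) C.
  apply: DeriveDef.
    by apply: derivableM => //; apply: derivable_id.
  rewrite deriveM //= derive_id.
  have -> : (fun=> C) = cst C :> (R -> R) by []. 
  by rewrite derive_cst scaler0 addr0 /GRing.scale /= mulr1.
exact: (is_derive1_comp (f:=expR) (g:=fun s => C * s)).
Qed.

Lemma gronwall0 (R : realType) (g : R -> R) (a C : R) :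
  (forall s, derivable g s 1) -> (forall s, 0 <= g s) -> g 0 = 0 ->
  (forall s, -a <= s <= a -> `|'D_1 g s| <= C * g s) ->
  forall s, -a <= s <= a -> g s = 0.
Proof.
move=> dg g0 g00 hb s /andP[hs1 hs2].
have a0 : 0 <= a by lra.
have key : forall D x : R, is_derive x 1 ((fun x => expR (D * x)) * g) (expR (D * x) * 'D_1 g x + g x * (expR (D * x) * D)).
  move=> D x.
  have := @is_deriveM R R^o (fun x => expR (D * x)) g x 1 _ _ (@is_derive_lin_exp _ D x) (derivableP (dg x)).
  by [].
have hcont : forall D : R, continuous ((fun x => expR (D * x)) * g).
  move=> D x. apply: differentiable_continuous; apply/derivable1_diffP.
  by have [] := key D x.
have itv x y : (x \in `[y, a]) = (y <= x <= a) by rewrite in_itv.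
have itv2 x y : (x \in `[- a, y]) = (- a <= x <= y) by rewrite in_itv.
have ev (D y : R) : ((fun x => expR (D * x)) * g) y = expR (D * y) * g y by [].
case: (leP 0 s) => hs.
  have hle : ((fun x => expR (- C * x)) * g) s <= ((fun x => expR (- C * x)) * g) 0.
    apply: (@ler0_derive1_le_cc R _ 0 a).
    - by move=> x _; have [] := key (- C) x.
    - move=> x; rewrite in_itv /= => /andP[x1 x2].
      rewrite derive1E (@derive_val _ _ _ _ _ _ _ (key (- C) x)).
      have -> : expR (- C * x) * 'D_1 g x + g x * (expR (- C * x) * - C) =
         expR (- C * x) * ('D_1 g x - C * g x) by ring.
      rewrite pmulr_rle0 ?expR_gt0 // subr_le0.
      apply: le_trans (ler_norm _) (hb _ _); apply/andP; split; lra.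
    - exact: continuous_subspaceT (hcont (- C)).
    - by rewrite itv hs hs2.
    - by rewrite itv lexx a0.
    - exact: hs.
  move: hle; rewrite !ev g00 mulr0 => hle.
  apply/eqP; rewrite eq_le g0 andbT.
  by move: hle; rewrite pmulr_rle0 // expR_gt0.
have hle : ((fun x => expR (C * x)) * g) s <= ((fun x => expR (C * x)) * g) 0.
  apply: (@ger0_derive1_le_cc R _ (- a) 0).
  - by move=> x _; have [] := key C x.
  - move=> x; rewrite in_itv /= => /andP[x1 x2].
    rewrite derive1E (@derive_val _ _ _ _ _ _ _ (key C x)).
    have -> : expR (C * x) * 'D_1 g x + g x * (expR (C * x) * C) =
       expR (C * x) * ('D_1 g x + C * g x) by ring.
    rewrite pmulr_rge0 ?expR_gt0 //.
    have h1 := hb x ltac:(apply/andP; split; lra).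
    have := ler_norm (- 'D_1 g x); rewrite normrN => h2.
    lra.
  - exact: continuous_subspaceT (hcont C).
  - by rewrite itv2 hs1 (ltW hs).
  - by rewrite itv2 lexx oppr_le0 a0.
  - exact: ltW hs.
move: hle; rewrite !ev g00 mulr0 => hle.
apply/eqP; rewrite eq_le g0 andbT.
by move: hle; rewrite pmulr_rle0 // expR_gt0.
Qed.
Lemma quad_bound (R : realType) n (u : 'I_n -> R) (b : 'I_n -> 'I_n -> R) (K : R) :
  (forall i j, `|b i j| <= K) ->
  `| \sum_j 2 * u j * \sum_i u i * b i j | <= 2 * n%:R * K * \sum_j u j ^+ 2.
Proof.
move=> hb.
apply: (le_trans (ler_norm_sum _ _ _)).
apply: (@le_trans _ _ (\sum_j \sum_(i < n) K * (u j ^+ 2 + u i ^+ 2))).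
  apply: ler_sum => j _.
  rewrite mulr_sumr; apply: (le_trans (ler_norm_sum _ _ _)).
  apply: ler_sum => i _.
  have K0 : 0 <= K by apply: le_trans (hb i i).
  have e1 : `|2 * u j * (u i * b i j)| = 2 * `|u j| * `|u i| * `|b i j|.
    by rewrite !normrM ger0_norm // mulrA.
  have e2 : u j ^+ 2 = `|u j| ^+ 2 by rewrite real_normK // num_real.
  have e3 : u i ^+ 2 = `|u i| ^+ 2 by rewrite real_normK // num_real.
  rewrite e1 e2 e3.
  set p := `|u j|; set q := `|u i|.
  have p0 : 0 <= p by apply: normr_ge0.
  have q0 : 0 <= q by apply: normr_ge0.
  have h1 : 2 * p * q * `|b i j| <= 2 * p * q * K.
    by apply: ler_wpM2l => //; apply: mulr_ge0 => //; apply: mulr_ge0.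
  have := mulr_ge0 K0 (sqr_ge0 (p - q)).
  move: h1; nra.
rewrite (eq_bigr (fun j => K * (n%:R * u j ^+ 2) + K * \sum_i u i ^+ 2)); last first.
  move=> j _; rewrite -mulr_sumr big_split /= sumr_const card_ord.
  by rewrite mulrDr mulr_natl.
rewrite big_split /= sumr_const card_ord -mulr_sumr -mulr_sumr.
rewrite mulr_natr.
have -> : (K * (\sum_j u j ^+ 2)) *+ n = n%:R * K * (\sum_j u j ^+ 2).
  by rewrite -mulr_natl mulrA.
rewrite [X in X <= _](_ : _ = 2 *+ n * K * \sum_(j < n) u j ^+ 2) //.
rewrite -mulr_natr; ring.
Qed.
Lemma Dxf0 (R : realType) (N : nat) (f : 'rV[R]_N -> R -> 'rV[R]_N) (hC1 : C1 f) x t :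
  Dxf f x t 0 = 0.
Proof.
have h := @Dxf_lin _ _ _ hC1 x t 1 0 0; rewrite !scale1r addr0 in h.
by apply: (addrI (Dxf f x t 0)); rewrite addr0 -h.
Qed.

Lemma Dxf_coord (R : realType) (N : nat) (f : 'rV[R]_N -> R -> 'rV[R]_N) (hC1 : C1 f)
   x t (y : 'rV[R]_N) j :
  (Dxf f x t y) 0 j = \sum_i y 0 i * (Dxf f x t 'e_i) 0 j.
Proof.
rewrite {1}(row_sum_delta y).
have -> : Dxf f x t (\sum_(i < N) y 0 i *: 'e_i) = \sum_(i < N) y 0 i *: Dxf f x t 'e_i.
  elim/big_rec2: _ => [|i a b _ h]; first exact: (@Dxf0 _ _ _ hC1).
  by rewrite -h (@Dxf_lin _ _ _ hC1).
by rewrite summxE; apply: eq_bigr => i _; rewrite mxE.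
Qed.

Lemma ode_unique (R : realType) (N : nat) (f : 'rV[R]_N -> R -> 'rV[R]_N) (hC1 : C1 f)
  (xs : R -> 'rV[R]_N) (hxs : forall t, derivable xs t 1) (w : R -> 'rV[R]_N) :
  (forall t, derivable w t 1 /\ derive w t 1 = Dxf f (xs t) t (w t)) ->
  w 0 = 0 -> forall t, w t = 0.
Proof.
move=> hw w0 t.
pose A s i j := (Dxf f (xs s) s 'e_i) 0 j.
have Acont i j : continuous (fun s => A s i j).
  move=> s; apply: (@continuous_comp _ _ _ (fun s => Dxf f (xs s) s 'e_i) (fun M : 'rV[R]_N => M 0 j)).
    exact: (@Dxf_cont _ _ _ hC1 xs 'e_i hxs).
  exact: coord_continuous.
pose a := `|t|.
have hK : forall p : 'I_N * 'I_N, exists K : R, forall s, -a <= s <= a -> `|A s p.1 p.2| <= K.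
  move=> [i j].
  have [||c _ hc] := @EVT_max R (fun s => `|A s i j|) (-a) a.
  - by have := normr_ge0 t; rewrite /a; lra.
  - apply: continuous_subspaceT => s.
    apply: continuous_comp; first exact: Acont.
    exact: norm_continuous.
  by exists `|A c i j| => s hs; apply: hc; rewrite in_itv.
have [Kf hKf] := fin_all_exists hK.
pose K := \sum_p `|Kf p|.
have Kb s i j : -a <= s <= a -> `|A s i j| <= K.
  move=> hs; apply: le_trans (hKf (i, j) s hs) _.
  apply: le_trans (ler_norm _) _.
  rewrite /K (bigD1 (i, j)) //= lerDl; apply: sumr_ge0 => p _; exact: normr_ge0.
pose h j := (fun s => w s 0 j) * (fun s => w s 0 j).
pose g := \sum_(j < N) h j.
have gE s : g s = \sum_j w s 0 j * w s 0 j by rewrite /g fct_sumE.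
have dwj j s : derivable (fun s => w s 0 j) s 1 := (derivable_mxP _ _ _).1 (hw s).1 0 j.
have Dwj j s : 'D_1 (fun s => w s 0 j) s = (Dxf f (xs s) s (w s)) 0 j.
  by rewrite -(hw s).2 derive_mx ?mxE //; exact: (hw s).1.
have dg s : derivable g s 1 by apply: derivable_sum => j; apply: derivableM.
have Dg s : 'D_1 g s = \sum_j 2 * w s 0 j * \sum_i w s 0 i * A s i j.
  rewrite derive_sum; last by move=> j; apply: derivableM.
  apply: eq_bigr => j _; rewrite deriveM // Dwj (@Dxf_coord _ _ _ hC1).
  rewrite /GRing.scale /=. ring.
have g0 : g 0 = 0 by rewrite gE w0; apply: big1 => j _; rewrite mxE mulr0.
have := @gronwall0 R g a (2 * N%:R * K) dg _ g0 _ t.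
have gpos s : 0 <= g s.
  by rewrite gE; apply: sumr_ge0 => j _; rewrite -expr2 sqr_ge0.
move=> /(_ gpos) /(_ _) hz.
have {hz}gt : g t = 0.
  apply: hz; last by rewrite /a -ler_norml lexx.
  move=> s hs; rewrite Dg gE.
  rewrite [X in _ <= _ * X](eq_bigr (fun j => w s 0 j ^+ 2)); last by move=> j _; rewrite expr2.
  apply: quad_bound => i j; exact: Kb.
apply/rowP => j; rewrite mxE.
move: gt; rewrite gE => /psumr_eq0P hz.
have /eqP := hz (fun j _ => ltac:(rewrite -expr2; exact: sqr_ge0)) j isT.
by rewrite mulf_eq0 orbb => /eqP ->.
Qed.
Lemma Dxf_sumZ (R : realType) (N : nat) (f : 'rV[R]_N -> R -> 'rV[R]_N) (hC1 : C1 f)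
   x t n (c : 'I_n -> R) (z : 'I_n -> 'rV[R]_N) :
  Dxf f x t (\sum_i c i *: z i) = \sum_i c i *: Dxf f x t (z i).
Proof.
elim/big_rec2: _ => [|i a b _ h]; first exact: (@Dxf0 _ _ _ hC1).
by rewrite -h (@Dxf_lin _ _ _ hC1).
Qed.

Lemma shift_derive (R : realType) (V : normedModType R) (y : R -> V) (T t : R) :
  derivable y (t + T) 1 ->
  derivable (fun s => y (s + T)) t 1 /\ 'D_1 (fun s => y (s + T)) t = 'D_1 y (t + T).
Proof.
rewrite /derivable /derive.
have -> : (fun h : R => h^-1 *: (((fun s => y (s + T)) \o shift t) (h *: 1) - y (t + T)))
   = (fun h : R => h^-1 *: ((y \o shift (t + T)) (h *: 1) - y (t + T))).
  by apply/funext => h /=; rewrite addrA.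
by [].
Qed.

Lemma Dxf_per (R : realType) (N : nat) (f : 'rV[R]_N -> R -> 'rV[R]_N) (T : R)
  (fper : forall x t, f x (t + T) = f x t) x t z :
  Dxf f x (t + T) z = Dxf f x t z.
Proof.
rewrite /Dxf /derive.
have -> : (fun h : R => h^-1 *: ((uncurry_f f \o shift (x, t + T)) (h *: (z, 0)) - uncurry_f f (x, t + T)))
  = (fun h : R => h^-1 *: ((uncurry_f f \o shift (x, t)) (h *: (z, 0)) - uncurry_f f (x, t))).
  by apply/funext => h; rewrite /uncurry_f /= addrA !fper.
by [].
Qed.

Lemma floquet_sol (R : realType) (N : nat) (f : 'rV[R]_N -> R -> 'rV[R]_N) (hC1 : C1 f)
  (T : R) (xs : R -> 'rV[R]_N) (hxs : forall t, derivable xs t 1)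
  (fper : forall x t, f x (t + T) = f x t) (xsper : forall t, xs (t + T) = xs t)
  (mu0 : R) (Phi : R -> 'M[R]_N) (hPhi : principal_fundamental f xs Phi)
  (v : 'rV[R]_N) (hv : v *m Phi T = mu0 *: v) :
  exists y : R -> 'rV[R]_N, solves_linearization f xs y /\ y 0 = v /\
     forall t, y (t + T) = mu0 *: y t.
Proof.
case: hPhi => Phi0 hrow.
pose y := \sum_(i < N) (fun t => v 0 i *: row i (Phi t)).
have yE t : y t = v *m Phi t by rewrite /y fct_sumE mulmx_sum_row.
have hy : solves_linearization f xs y.
  move=> t.
  have dr i : derivable (fun t => v 0 i *: row i (Phi t)) t 1.
    exact: (derivableZ (hrow i t).1).
  split; first by apply: derivable_sum.
  rewrite derive_sum // yE mulmx_sum_row (@Dxf_sumZ _ _ _ hC1).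
  apply: eq_bigr => i _.
  rewrite (deriveZ _ (hrow i t).1); congr (_ *: _).
  exact: (hrow i t).2.
exists y; split => //; split; first by rewrite yE Phi0 mulmx1.
pose w := fun t => - mu0 *: y t + y (t + T).
have hw : forall t, derivable w t 1 /\ derive w t 1 = Dxf f (xs t) t (w t).
  move=> t.
  have [ds Ds] := @shift_derive _ _ _ _ _ (hy (t + T)).1.
  have dy := (hy t).1.
  have dZ := derivableZ (k := - mu0) dy.
  have dW := derivableD dZ ds.
  have DW := deriveD dZ ds.
  split; first exact dW.
  change ('D_1 ((- mu0 \*: y) + (fun s => y (s + T))) t = Dxf f (xs t) t (w t)).
  rewrite DW (deriveZ _ dy) Ds (hy t).2 (hy (t + T)).2 xsper (@Dxf_per _ _ _ T fper).
  by rewrite /w (@Dxf_lin _ _ _ hC1).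
have w0 : w 0 = 0.
  by rewrite /w add0r !yE hv Phi0 mulmx1 scaleNr addNr.
move=> t; have := @ode_unique _ _ _ hC1 xs hxs w hw w0 t.
rewrite /w scaleNr addrC => /eqP; rewrite subr_eq0 => /eqP.
by [].
Qed.
Lemma root_c (R : realType) (T k mu0 : R) : 0 < T -> 1 < mu0 ->
  exists c : R, 1 < expR (c * T) * mu0 /\ c - k + k * expR (- (c * T)) / mu0 = 0.
Proof.
move=> T0 mu1.
have mu0p : 0 < mu0 by lra.
have [y0 hy0] := expR_total (ltac:(by rewrite invr_gt0) : 0 < mu0^-1).
pose c0 := y0 / T.
have c0T : c0 * T = y0 by rewrite /c0 divfK // gt_eqF.
have y0n : y0 < 0.
  by rewrite -expR_lt1 hy0 invf_lt1.
have c0n : c0 < 0 by rewrite /c0 pmulr_llt0 // invr_gt0.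
pose G := ((@id R) - cst k) + (cst (k / mu0) * (fun c : R => expR ((- T) * c))).
have GE c : G c = c - k + k * expR (- (c * T)) / mu0.
  change (c - k + k / mu0 * expR (- T * c) = c - k + k * expR (- (c * T)) / mu0).
  by rewrite mulNr (mulrC T c); congr (_ + _); rewrite mulrAC.
have Gc0 : G c0 = c0.
  rewrite GE c0T expRN hy0 invrK mulfK ?gt_eqF //; ring.
pose b := 2 * `|k|.
have b0 : 0 <= b by rewrite /b mulr_ge0 // normr_ge0.
have Gb : 0 <= G b.
  rewrite GE.
  have e1 : expR (- (b * T)) <= 1 by rewrite expR_le1 oppr_le0 mulr_ge0 // ltW.
  have e0 : 0 < expR (- (b * T)) by apply: expR_gt0.
  have q1 : expR (- (b * T)) / mu0 <= 1.
    by rewrite ler_pdivrMr // mul1r; lra.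
  have q0 : 0 <= expR (- (b * T)) / mu0 by rewrite divr_ge0 // ltW.
  rewrite /b -mulrA.
  set q := expR (- (b * T)) / mu0 in q1 q0 *.
  have : `|k| * q <= `|k| by rewrite ler_piMr // normr_ge0.
  have : - (`|k| * q) <= k * q.
    have := ler_norm (- (k * q)); rewrite normrN normrM (ger0_norm q0).
    lra.
  have := ler_norm k.
  lra.
have Gcont : continuous G.
  move=> c.
  apply: continuousD.
    apply: continuousB; first exact: cvg_id.
    exact: cvg_cst.
  apply: continuousM; first exact: cvg_cst.
  apply: differentiable_continuous; apply/derivable1_diffP.
  by have [] := @is_derive_lin_exp R (- T) c.
have [c cin Gc] : exists2 c, c \in `[c0, b] & G c = 0.
  apply: (@IVT R G c0 b 0 (ltW (lt_le_trans c0n b0)) (continuous_subspaceT Gcont)).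
  rewrite Gc0; apply/andP; split.
    by rewrite ge_min ltW.
  by rewrite le_max Gb orbT.
have cc0 : c0 < c.
  rewrite lt_neqAle (itvP cin) andbT; apply/eqP => ec.
  by move: Gc; rewrite -ec Gc0 => ec0; move: c0n; rewrite ec0 ltxx.
exists c; split; last by rewrite -GE.
have m0 : mu0 != 0 by rewrite gt_eqF.
by rewrite -(mulVf m0) -hy0 ltr_pM2r // ltr_expR -c0T ltr_pM2r.
Qed.
Lemma deriveZfun (R : realType) m n (e : R -> R) (y : R -> 'M[R]_(m, n)) (t de : R) :
  is_derive t 1 e de -> derivable y t 1 ->
  derivable (fun s => e s *: y s) t 1 /\
  'D_1 (fun s => e s *: y s) t = de *: y t + e t *: 'D_1 y t.
Proof.
move=> [de1 de2] dy.
have dyij i j : derivable (fun s => y s i j) t 1 := (derivable_mxP _ _ _).1 dy i j.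
have dzij i j : derivable (fun s => (e s *: y s) i j) t 1.
  have -> : (fun s => (e s *: y s) i j) = e * (fun s => y s i j).
    by apply/funext => s; rewrite mxE.
  exact: derivableM.
have dz : derivable (fun s => e s *: y s) t 1 by apply/derivable_mxP.
split => //.
rewrite (derive_mx dz) (derive_mx dy); apply/matrixP => i j; rewrite !mxE.
have -> : (fun s => (e s *: y s) i j) = e * (fun s => y s i j).
  by apply/funext => s; rewrite mxE.
rewrite deriveM // de2 addrC.
congr (_ + _); exact: mulrC.
Qed.
Theorem corollary2 (R : realType) (N : nat) (f : 'rV[R]_N -> R -> 'rV[R]_N)
  (T : R) (xs : R -> 'rV[R]_N) :
  0 < T ->
  C1 f ->
  (forall x t, f x (t + T) = f x t) ->
  is_solution f xs ->
  (forall t, xs (t + T) = xs t) ->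
  (exists mu : R, 1 < mu /\ ode_floquet_multiplier f xs T mu) ->
  forall k : R, exists mu : R, 1 < mu /\ dde_floquet_multiplier f xs k T mu.
Proof.
move=> T0 hC1 fper hsol xsper [mu0 [mu1 [Phi [hPhi ev]]]] k.
have hxs t : derivable xs t 1 := (hsol t).1.
have [v hv vn0] := eigenvalueP ev.
have [y [hy [y0 yper]]] := @floquet_sol _ _ _ hC1 T xs hxs fper xsper mu0 Phi hPhi v hv.
have [c [cmu Gc]] := @root_c _ T k mu0 T0 mu1.
have mu0p : 0 < mu0 by lra.
exists (expR (c * T) * mu0); split => //.
split; first by rewrite mulf_neq0 ?gt_eqF ?expR_gt0.
exists (fun t => expR (c * t) *: y t); split; last split.
- move=> t.
  have [dz Dz] := @deriveZfun _ _ _ _ _ _ _ (@is_derive_lin_exp _ c t) (hy t).1.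
  split => //; rewrite Dz (hy t).2.
  have hc : c = k - k * expR (- (c * T)) / mu0 by lra.
  have ymT : y (t - T) = mu0^-1 *: y t.
    by rewrite -{2}(subrK T t) yper scalerA mulVf ?gt_eqF // scale1r.
  have hl := @Dxf_lin _ _ _ hC1 (xs t) t (expR (c * t)) (y t) 0.
  rewrite addr0 (@Dxf0 _ _ _ hC1) addr0 in hl.
  rewrite hl ymT mulrBr expRD !scalerA.
  set e := expR (c * t); set E := expR (- (c * T)).
  rewrite -scalerBl scalerA addrC; congr (_ + _); congr (_ *: _).
  rewrite {1}hc -/E; ring.
- by exists 0; rewrite mulr0 expR0 scale1r y0.
- move=> t; rewrite yper mulrDr expRD !scalerA; congr (_ *: _); ring.
Qed.
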